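(* Let $B=XCX^T$ where $X$ is a real non-singular $n\times n$ matrix and $C$ is a real symmetric $n\times n$ matrix, and let $\Pi$ be the orthogonal projection onto the column space of $B$. Then \[ B^{+}=\Pi X^{-T}C^{+}X^{-1}\Pi. \]
   Context: $M^{+}$ denotes the Moore–Penrose pseudo-inverse of $M$, and $X^{-T}=(X^{-1})^T$. *)

(* Defs.v *)
From HB Require Import structures.
From mathcomp Require Import all_boot all_order all_algebra.
From mathcomp Require Import reals.
Set Implicit Arguments. Unset Strict Implicit. Unset Printing Implicit Defensive.
Import Order.TTheory GRing.Theory Num.Theory.
Local Open Scope ring_scope.

(* Moore–Penrose pseudo-inverse, via the four Penrose conditions (real case,
   so conjugate transpose = transpose).  These conditions determine M^+ uniquely. *)
Definition is_pinv (R : realType) (m n : nat)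
  (M : 'M[R]_(m, n)) (P : 'M[R]_(n, m)) : Prop :=
  [/\ M *m P *m M = M,
      P *m M *m P = P,
      (M *m P)^T = M *m P
    & (P *m M)^T = P *m M].

(* Pi is the orthogonal projection onto the column space of B:
   symmetric, idempotent, and its column space equals that of B. *)
Definition is_orth_proj_colspace (R : realType) (n : nat)
  (B Pi : 'M[R]_n) : Prop :=
  [/\ Pi^T = Pi, Pi *m Pi = Pi & (Pi^T == B^T)%MS].

(* Main.v *)
Require Import Defs.
From HB Require Import structures.
From mathcomp Require Import all_boot all_order all_algebra.
From mathcomp Require Import reals.
Import Order.TTheory GRing.Theory Num.Theory.
Local Open Scope ring_scope.

Theorem mainTheorem18 (R : realType) (n : nat) (X C Bp Cp Pi : 'M[R]_n) :
  X \in unitmx ->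
  C^T = C ->
  is_pinv (X *m C *m X^T) Bp ->
  is_pinv C Cp ->
  is_orth_proj_colspace (X *m C *m X^T) Pi ->
  Bp = Pi *m (invmx X)^T *m Cp *m invmx X *m Pi.
Proof.
move=> Xu CT [B1 B2 B3 B4] [C1 _ _ _] [PT PP /andP[s1 s2]].
set B := X *m C *m X^T in B1 B2 B3 B4 s1 s2 *.
have BT : B^T = B by rewrite /B !trmx_mul trmxK CT mulmxA.
have [W HW] := submxP s1. have [V HV] := submxP s2.
have PB : Pi *m B = B.
  have -> : B = Pi *m V^T by rewrite -(trmxK B) HV trmx_mul trmxK.
  by rewrite mulmxA PP.
have BP : B *m Pi = B by rewrite -{1}BT -PT -trmx_mul PB BT.
have PWB : Pi = W *m B by rewrite -PT HW BT.
have PBW : Pi = B *m W^T by rewrite -(trmxK Pi) HW trmx_mul trmxK.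
have E : B *m Bp = Pi.
  have EP : B *m Bp *m Pi = Pi by rewrite {1}PBW mulmxA B1 -PBW.
  have PE : Pi *m (B *m Bp) = B *m Bp by rewrite mulmxA PB.
  by rewrite -PT -EP trmx_mul B3 PT PE.
have F : Bp *m B = Pi.
  have PF : Pi *m (Bp *m B) = Pi by rewrite {1}PWB -mulmxA (mulmxA B) B1 -PWB.
  have FP : Bp *m B *m Pi = Bp *m B by rewrite -mulmxA BP.
  by rewrite -PT -PF trmx_mul B4 PT FP.
have BQB : B *m ((invmx X)^T *m Cp *m invmx X) *m B = B.
  rewrite /B -!mulmxA (mulmxA X^T) -trmx_mul mulVmx // trmx1 mul1mx (mulmxA (invmx X)) mulVmx // mul1mx.
  by rewrite !mulmxA -(mulmxA X C Cp) -(mulmxA X (C *m Cp)) C1.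
clearbody B.
rewrite -B2 -{1}BQB !mulmxA F -(mulmxA _ B Bp) E.
done.
Qed.
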